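(* Let $R$ be a tangible supersemifield, $(q,b)$ a quadratic pair on an $R$-module $V$, $x,y\in V$, and put $\alpha_1=q(x)$, $\alpha_2=q(y)$, $\alpha=b(x,y)$, all assumed nonzero. Choose $\zeta,\eta\in\mathcal T$ with $\alpha\cong_\nu\zeta\alpha_1$ and $\alpha_2\cong_\nu\eta\alpha$. Let $\lambda,\mu\in R$, not both zero. (i) If $\alpha^2>_\nu\alpha_1\alpha_2$ and it is not the case that [$R$ is discrete and $\alpha^2\cong_\nu\pi^{-1}\alpha_1\alpha_2$], then $q(\lambda x+\mu y)=\lambda^2\alpha_1$ if $\lambda>_\nu\zeta\mu$; $=e\lambda^2\alpha_1=e\lambda\mu\alpha$ if $\lambda\cong_\nu\zeta\mu$; $=\lambda\mu\alpha$ if $\eta\mu<_\nu\lambda<_\nu\zeta\mu$; $=e\mu^2\alpha_2=e\lambda\mu\alpha$ if $\lambda\cong_\nu\eta\mu$; $=\mu^2\alpha_2$ if $\lambda<_\nu\eta\mu$. (ii) If $R$ is discrete and $\alpha^2\cong_\nu\pi^{-1}\alpha_1\alpha_2$, then exactly one of $\lambda>_\nu\zeta\mu$, $\lambda\cong_\nu\zeta\mu$, $\lambda\cong_\nu\eta\mu$, $\lambda<_\nu\eta\mu$ holds, and correspondingly $q(\lambda x+\mu y)$ equals $\lambda^2\alpha_1$, $e\lambda^2\alpha_1=e\lambda\mu\alpha$, $e\mu^2\alpha_2=e\lambda\mu\alpha$, $\mu^2\alpha_2$. (iii) If $\alpha^2\le_\nu\alpha_1\alpha_2$, then $q(\lambda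 x+\mu y)=\lambda^2\alpha_1$ if $\lambda^2\alpha_1>_\nu\mu^2\alpha_2$; $=e\lambda^2\alpha_1=e\mu^2\alpha_2$ if $\lambda^2\alpha_1\cong_\nu\mu^2\alpha_2$ (which can only happen if $\alpha_1\alpha_2$ is a $\nu$-square); $=\mu^2\alpha_2$ if $\lambda^2\alpha_1<_\nu\mu^2\alpha_2$.
   Context: All semirings are commutative with $1$. A semiring $R$ is supertropical if $e:=1+1$ satisfies $e+e=e$ and, for all $x,y\in R$: if $ex\neq ey$ then $x+y\in\{x,y\}$, and if $ex=ey$ then $x+y=ey$. $eR$ is totally ordered by $u\le v\iff u+v=v$; write $x\le_\nu y$, $x\cong_\nu y$, $x<_\nu y$ for $ex\le ey$, $ex=ey$, $ex<ey$. $\mathcal T=R\setminus eR$, $\mathcal G=eR\setminus\{0\}$. A tangible supersemifield is a supertropical semiring in which $\mathcal T$ and $\mathcal G$ are groups under multiplication and $e\mathcal T=\mathcal G$. It is discrete if $\mathcal G$ has a smallest element $c_0>e$, and then $\pi\in\mathcal T$ denotes an element with $e\pi^{-1}=c_0$. An element $a\in R$ is a $\nu$-square if $a\cong_\nu d^2$ for some $d\in R$. A quadratic form on an $R$-module $V$ is a map $q:V\to R$ with $q(ax)=a^2q(x)$ such that some symmetric bilinear $b$ satisfies $q(x+y)=q(x)+q(y)+b(x,y)$; $(q,b)$ is a quadratic pair. *)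

(* Defs.v *)
From HB Require Import structures.
From mathcomp Require Import all_boot all_order all_algebra.
Set Implicit Arguments. Unset Strict Implicit. Unset Printing Implicit Defensive.
Import GRing.Theory.
Local Open Scope ring_scope.

Section Supertropical.
Variable R : comPzSemiRingType.

Definition ee : R := 1 + 1.

Definition supertropical : Prop :=
  ee + ee = ee /\
  (forall x y : R, ee * x <> ee * y -> x + y = x \/ x + y = y) /\
  (forall x y : R, ee * x = ee * y -> x + y = ee * y).

Definition in_eR (x : R) : Prop := exists r : R, x = ee * r.
Definition tangible (x : R) : Prop := ~ in_eR x.
Definition ghostnz (x : R) : Prop := in_eR x /\ x <> 0.

(** nu-relations: x <=_nu y iff ex <= ey in eR, where u <= v iff u + v = v *)
Definition nu_le (x y : R) : Prop := ee * x + ee * y = ee * y.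
Definition nu_eq (x y : R) : Prop := ee * x = ee * y.
Definition nu_lt (x y : R) : Prop := nu_le x y /\ ee * x <> ee * y.

(** S is a group under the multiplication of R (associativity is inherited) *)
Definition mul_group (S : R -> Prop) : Prop :=
  (forall x y, S x -> S y -> S (x * y)) /\
  exists u, S u /\ (forall x, S x -> u * x = x /\ x * u = x) /\
            (forall x, S x -> exists y, S y /\ x * y = u /\ y * x = u).

Definition tangible_supersemifield : Prop :=
  supertropical /\ mul_group tangible /\ mul_group ghostnz /\
  (forall x, tangible x -> ghostnz (ee * x)) /\
  (forall g, ghostnz g -> exists x, tangible x /\ g = ee * x).

Definition smallest_above_e (c0 : R) : Prop :=
  ghostnz c0 /\ nu_lt ee c0 /\
  (forall g, ghostnz g -> nu_lt ee g -> nu_le c0 g).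

(** pinv plays the role of pi^{-1}: a tangible element with e pi^{-1} = c0,
    the smallest element of G above e (so R is discrete) *)
Definition discrete_pinv (pinv : R) : Prop :=
  tangible pinv /\ smallest_above_e (ee * pinv).

Definition discrete_and_nu_eq_pinv (a c : R) : Prop :=
  exists pinv, discrete_pinv pinv /\ nu_eq a (pinv * c).

Definition nu_square (a : R) : Prop := exists d : R, nu_eq a (d ^+ 2).

Variable V : lSemiModType R.

Definition quadratic_pair (q : V -> R) (b : V -> V -> R) : Prop :=
  (forall (a : R) (x : V), q (a *: x) = a ^+ 2 * q x) /\
  (forall x y, b x y = b y x) /\
  (forall x x' y, b (x + x') y = b x y + b x' y) /\
  (forall (a : R) x y, b (a *: x) y = a * b x y) /\
  (forall x y, q (x + y) = q x + q y + b x y).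

End Supertropical.

(* Main.v *)
Require Import Defs.
From HB Require Import structures.
From mathcomp Require Import all_boot all_order all_algebra.
From mathcomp Require Import ring.
From Stdlib Require Import Classical.
Set Implicit Arguments. Unset Strict Implicit.
Import GRing.Theory.
Local Open Scope ring_scope.

Section S.
Variable R : comPzSemiRingType.
Hypothesis HR : tangible_supersemifield R.
Local Notation e := (ee R).

Lemma eeE : e * e = e.
Proof.
case: HR => [[H1 _] _].
have -> : e * e = e + e by rewrite {2}/ee mulrDr mulr1.
exact: H1.
Qed.

Lemma one_tang : tangible (1 : R).
Proof.
case: HR => _ [[_ [u [Tu _]]] _] [r Hr].
apply: Tu; exists (u * r); by rewrite -{1}(mulr1 u) Hr; ring.
Qed.

Lemma ee_neq0 : e <> 0.
Proof.
case: HR => _ [_ [_ [H4 _]]].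
by case: (H4 _ one_tang); rewrite mulr1.
Qed.

Lemma ghost_e (u : R) : in_eR u -> e * u = u.
Proof. by case=> r ->; rewrite mulrA eeE. Qed.

Lemma tang_neq0 (x : R) : tangible x -> x <> 0.
Proof. move=> T E; apply: T; exists 0; by rewrite E mulr0. Qed.

Lemma inv_ex (z : R) : z <> 0 -> exists w, e * (z * w) = e.
Proof.
move=> nz.
case: HR => _ [[_ [u [Tu [Uid Inv]]]] [[_ [g [Gg [Gid GInv]]]] [H4 _]]].
case: (classic (in_eR z)) => Hz.
- have Gz : ghostnz z by split.
  have Ge : ghostnz e by move: (H4 _ one_tang); rewrite mulr1.
  have ge : g = e.
    case: (Gid _ Ge) => H1 _.
    have H2 := ghost_e (proj1 Gg).
    by rewrite -H2 mulrC.
  case: (GInv _ Gz) => w [_ [Hw _]].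
  by exists w; rewrite Hw ge eeE.
- case: (Inv z Hz) => w [_ [Hw _]].
  exists w; rewrite Hw.
  case: (Uid _ one_tang) => H1 _.
  by rewrite mulr1 in H1; rewrite H1 mulr1.
Qed.

Lemma zero_nu (x : R) : e * x = 0 -> x = 0.
Proof.
move=> H; apply: NNPP => nx.
case: (inv_ex nx) => w Hw.
apply: ee_neq0; rewrite -Hw mulrA H mul0r //.
Qed.

Lemma mul_neq0 (x y : R) : x <> 0 -> y <> 0 -> x * y <> 0.
Proof.
move=> nx ny E; case: (inv_ex ny) => w Hw.
apply: nx; apply: zero_nu.
have -> : e * x = x * (e * (y * w)) by rewrite Hw mulrC.
have -> : x * (e * (y * w)) = e * (x * y) * w by ring.
by rewrite E mulr0 mul0r.
Qed.


Lemma nu_leE (x y : R) : nu_le x y = (e * x + e * y = e * y). Proof. by []. Qed.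

Lemma leC (x x' y y' : R) : e * x = e * x' -> e * y = e * y' -> nu_le x y -> nu_le x' y'.
Proof. by rewrite /nu_le => -> ->. Qed.
Lemma ltC (x x' y y' : R) : e * x = e * x' -> e * y = e * y' -> nu_lt x y -> nu_lt x' y'.
Proof. by rewrite /nu_lt /nu_le => -> ->. Qed.

Lemma le_trans (x y z : R) : nu_le x y -> nu_le y z -> nu_le x z.
Proof. rewrite /nu_le => H1 H2. by rewrite -H2 addrA H1. Qed.

Lemma le_anti (x y : R) : nu_le x y -> nu_le y x -> nu_eq x y.
Proof. rewrite /nu_le /nu_eq => H1 H2. by rewrite -H2 addrC H1. Qed.

Lemma lt_nle (x y : R) : nu_lt x y -> nu_le y x -> False.
Proof. case=> H1 H2 H3; apply: H2; exact: le_anti. Qed.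

Lemma lt_neq (x y : R) : nu_lt x y -> nu_eq x y -> False.
Proof. by case. Qed.

Lemma le_refl (x : R) : nu_le x x.
Proof. rewrite /nu_le; case: HR => [[H1 _] _]. by rewrite -mulrDl H1. Qed.

Lemma eq_le (x y : R) : nu_eq x y -> nu_le x y.
Proof. rewrite /nu_eq => H. apply: (leC (erefl _) H); exact: le_refl. Qed.

Lemma eq_sym (x y : R) : nu_eq x y -> nu_eq y x.
Proof. by rewrite /nu_eq. Qed.

Lemma lt_le (x y : R) : nu_lt x y -> nu_le x y.
Proof. by case. Qed.

Lemma lt_le_trans (x y z : R) : nu_lt x y -> nu_le y z -> nu_lt x z.
Proof.
move=> [H1 H2] H3; split; first exact: le_trans H3.
move=> E; apply: H2; apply: le_anti => //.
by apply: (leC (erefl _) (esym E)).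
Qed.

Lemma le_lt_trans (x y z : R) : nu_le x y -> nu_lt y z -> nu_lt x z.
Proof.
move=> H1 [H3 H2]; split; first exact: le_trans H3.
move=> E; apply: H2; apply: le_anti => //.
by apply: (leC E (erefl _)).
Qed.

Lemma tricho (x y : R) : [\/ nu_lt x y, nu_eq x y | nu_lt y x].
Proof.
case: (classic (e * x = e * y)) => E; first by apply: Or32.
case: HR => [[_ [H2 _]] _].
have := H2 (e * x) (e * y); rewrite !mulrA eeE => /(_ E) [H|H].
- apply: Or33; split; first by rewrite /nu_le addrC H.
  by move=> E'; apply: E.
- by apply: Or31.
Qed.

Lemma le_mulr (x y z : R) : nu_le x y -> nu_le (x * z) (y * z).
Proof. rewrite /nu_le !mulrA -mulrDl => ->. by []. Qed.

Lemma eq_mulr (x y z : R) : nu_eq x y -> nu_eq (x * z) (y * z).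
Proof. rewrite /nu_eq !mulrA => ->. by []. Qed.

Lemma cancel_eq (x y z : R) : z <> 0 -> nu_eq (x * z) (y * z) -> nu_eq x y.
Proof.
move=> nz; rewrite /nu_eq => H; case: (inv_ex nz) => w Hw.
have Ex : forall t, e * t = e * (t * z) * w.
  move=> t. rewrite -{1}Hw. ring.
by rewrite Ex H -Ex.
Qed.

Lemma lt_mulr (x y z : R) : z <> 0 -> nu_lt x y -> nu_lt (x * z) (y * z).
Proof.
move=> nz [H1 H2]; split; first exact: le_mulr.
by move=> E; apply: H2; apply: cancel_eq E.
Qed.

Lemma cancel_lt (x y z : R) : z <> 0 -> nu_lt (x * z) (y * z) -> nu_lt x y.
Proof.
move=> nz H; case: (tricho x y) => // [E|L].
- by case: (lt_neq H (eq_mulr z E)).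
- by case: (lt_nle H (lt_le (lt_mulr nz L))).
Qed.

Lemma cancel_le (x y z : R) : z <> 0 -> nu_le (x * z) (y * z) -> nu_le x y.
Proof.
move=> nz H; case: (tricho x y) => [L|E|L]; [exact: lt_le | exact: eq_le |].
by case: (lt_nle (lt_mulr nz L) H).
Qed.

Lemma lt_neq0 (x y : R) : nu_lt x y -> y <> 0.
Proof.
move=> [H1 H2] E; apply: H2; move: H1; rewrite /nu_le E mulr0 addr0 => ->. by [].
Qed.

Lemma eq_neq0 (x y : R) : nu_eq x y -> x <> 0 -> y <> 0.
Proof. rewrite /nu_eq => E nx ny; apply: nx; apply: zero_nu; by rewrite E ny mulr0. Qed.

Lemma lt_mul2 (x y x' y' : R) : nu_le x x' -> nu_lt y y' -> x' <> 0 -> nu_lt (x * y) (x' * y').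
Proof.
move=> H1 H2 nz; apply: (le_lt_trans (y := x' * y)); first exact: le_mulr.
rewrite [x' * y]mulrC [x' * y']mulrC; exact: lt_mulr.
Qed.

Lemma zero_le (x : R) : nu_le 0 x.
Proof. by rewrite /nu_le mulr0 add0r. Qed.

Lemma sum_lt (x y : R) : nu_lt y x -> x + y = x.
Proof.
move=> L; case: HR => [[_ [H2 _]] _].
have [E|E] : x + y = x \/ x + y = y.
  apply: H2 => E; by case: L => _ /(_ (esym E)).
  by [].
exfalso; apply: (lt_nle L); by rewrite /nu_le -mulrDr E.
Qed.

Lemma sum_eq (x y : R) : nu_eq x y -> x + y = e * y.
Proof. case: HR => [[_ [_ H3]] _]; exact: H3. Qed.

Lemma ee_eq (x : R) : e * (e * x) = e * x.
Proof. by rewrite mulrA eeE. Qed.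

Lemma sum_lt_lt (x y z : R) : nu_lt x z -> nu_lt y z -> nu_lt (x + y) z.
Proof.
move=> Lx Ly; case: (tricho x y) => [L|E|L].
- by rewrite addrC sum_lt.
- rewrite sum_eq //; exact: (ltC (esym (ee_eq y)) (erefl _) Ly).
- by rewrite sum_lt.
Qed.

Lemma sum_le (x y : R) : nu_le y x -> e * x + y = e * x.
Proof.
move=> H; case: (tricho y x) => [L|E|L].
- rewrite sum_lt //; exact: (ltC (erefl _) (esym (ee_eq x)) L).
- rewrite sum_eq; last by rewrite /nu_eq ee_eq E.
  by rewrite /nu_eq in E; rewrite E.
- by case: (lt_nle L H).
Qed.


Lemma s3a (A B C : R) : nu_lt B A -> nu_lt C A -> A + B + C = A.
Proof. by move=> LB LC; rewrite (sum_lt LB) (sum_lt LC). Qed.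

Lemma s3b (A B C : R) : nu_eq A C -> nu_lt B A -> A + B + C = e * A /\ A + B + C = e * C.
Proof. move=> E LB; rewrite (sum_lt LB) (sum_eq E); by move: E; rewrite /nu_eq => ->. Qed.

Lemma s3c (A B C : R) : nu_lt A C -> nu_lt B C -> A + B + C = C.
Proof. move=> LA LB; rewrite [A + B + C]addrC; apply: sum_lt; exact: sum_lt_lt LA LB. Qed.

Lemma s3d (A B C : R) : nu_eq B C -> nu_lt A B -> A + B + C = e * B /\ A + B + C = e * C.
Proof.
move=> E LA; rewrite (addrC A) (sum_lt LA) (sum_eq E); by move: E; rewrite /nu_eq => ->.
Qed.

Lemma s3e (A B C : R) : nu_lt A B -> nu_lt C B -> A + B + C = B.
Proof. by move=> LA LC; rewrite (addrC A) (sum_lt LA) (sum_lt LC). Qed.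

Lemma s3f (A B C : R) : nu_eq A B -> nu_le C A -> A + B + C = e * A /\ A + B + C = e * B.
Proof.
move=> E LC; rewrite (sum_eq E) sum_le; last by apply: le_trans LC (eq_le E).
by move: E; rewrite /nu_eq => ->.
Qed.

Lemma sq_lt (x y : R) : nu_lt (x * x) (y * y) -> nu_lt x y.
Proof.
move=> H; case: (tricho x y) => [//|E|L].
- exfalso; apply: (lt_neq H).
  move: E; rewrite /nu_eq => E.
  transitivity (x * (e * y)); first by rewrite -E; ring.
  transitivity (y * (e * x)); first ring.
  by rewrite E; ring.
- by case: (lt_nle H (lt_le (lt_mul2 (lt_le L) L (lt_neq0 L)))).
Qed.

Lemma sq_le (x y : R) : nu_le (x * x) (y * y) -> nu_le x y.
Proof.
move=> H; case: (tricho x y) => [L|E|L]; [exact: lt_le | exact: eq_le |].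
by case: (lt_nle (lt_mul2 (lt_le L) L (lt_neq0 L)) H).
Qed.


Lemma five (a1 a2 a z h l m : R) :
  a1 <> 0 -> a <> 0 -> z <> 0 -> h <> 0 ->
  e * a = e * (z * a1) -> e * a2 = e * (h * a) -> nu_lt h z -> ~ (l = 0 /\ m = 0) ->
  let S := l ^+ 2 * a1 + m ^+ 2 * a2 + l * m * a in
  [/\ nu_lt (z * m) l -> S = l ^+ 2 * a1,
      nu_eq l (z * m) -> S = e * l ^+ 2 * a1 /\ S = e * l * m * a,
      nu_lt (h * m) l -> nu_lt l (z * m) -> S = l * m * a,
      nu_eq l (h * m) -> S = e * m ^+ 2 * a2 /\ S = e * l * m * a
    & nu_lt l (h * m) -> S = m ^+ 2 * a2].
Proof.
move=> n1 na nz nh Ha Ha2 Hzh Hnz S.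
have EA : e * (l ^+ 2 * a1) = e * (l * l * a1) by congr (_ * _); ring.
have EB : e * (m ^+ 2 * a2) = e * ((h * m) * (z * m) * a1).
  transitivity (m ^+ 2 * (e * a2)); first ring.
  rewrite Ha2; transitivity (m ^+ 2 * h * (e * a)); first ring.
  by rewrite Ha; ring.
have EB2 : e * (m ^+ 2 * a2) = e * ((h * m) * (m * a)).
  transitivity (m ^+ 2 * (e * a2)); first ring.
  by rewrite Ha2; ring.
have EC : e * (l * m * a) = e * (l * (z * m) * a1).
  transitivity (l * m * (e * a)); first ring.
  by rewrite Ha; ring.
have EC2 : e * (l * m * a) = e * (l * (m * a)) by ring.
have Hzm : nu_le (h * m) (z * m) by apply: le_mulr; exact: lt_le.
have m0l : m = 0 -> forall t, nu_eq l (t * m) -> False.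
  move=> m0 t; rewrite /nu_eq m0 !mulr0 => /zero_nu l0; exact: Hnz.
split.
- move=> H; have nl := lt_neq0 H.
  apply: s3a.
  + apply: (ltC (esym EB) (esym EA)); apply: lt_mulr => //.
    apply: lt_mul2 => //; exact: le_trans Hzm (lt_le H).
  + apply: (ltC (esym EC) (esym EA)); apply: lt_mulr => //.
    exact: lt_mul2 (le_refl l) H nl.
- move=> H.
  have nm : m <> 0 by move=> m0; exact: m0l m0 z H.
  have nzm := mul_neq0 nz nm.
  have nl : l <> 0 := eq_neq0 (eq_sym H) nzm.
  move: (H); rewrite /nu_eq => H'.
  have [E1 E2] : S = e * (l ^+ 2 * a1) /\ S = e * (l * m * a).
    apply: s3b.
    + rewrite /nu_eq EA EC.
      transitivity (l * a1 * (e * l)); first ring.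
      by rewrite H'; ring.
    + apply: (ltC (esym EB) (x' := m ^+ 2 * a2) (y := z * m * (z * m) * a1)).
      * transitivity (a1 * (z * m) * (e * (z * m))); first ring.
        rewrite -H'; transitivity (a1 * l * (e * (z * m))); first ring.
        by rewrite -H'; ring.
      * apply: lt_mulr => //; apply: lt_mulr => //; exact: lt_mulr.
  by split; [rewrite E1 | rewrite E2]; rewrite !mulrA.
- move=> H1 H2; have nl := lt_neq0 H1.
  have nm : m <> 0 by move=> m0; apply: (lt_neq0 H2); rewrite m0 mulr0.
  apply: s3c.
  + apply: (ltC (esym EA) (esym EC)); apply: lt_mulr => //.
    exact: lt_mul2 (le_refl l) H2 nl.
  + apply: (ltC (esym EB2) (esym EC2)); apply: lt_mulr => //.
    exact: mul_neq0.
- move=> H.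
  have nm : m <> 0 by move=> m0; exact: m0l m0 h H.
  have nhm := mul_neq0 nh nm.
  move: (H); rewrite /nu_eq => H'.
  have [E1 E2] : S = e * (m ^+ 2 * a2) /\ S = e * (l * m * a).
    apply: s3d.
    + rewrite /nu_eq EB2 EC2.
      transitivity (m * a * (e * (h * m))); first ring.
      by rewrite -H'; ring.
    + apply: (ltC (x := h * m * (h * m) * a1) _ (esym EB)).
      * transitivity (a1 * (h * m) * (e * (h * m))); first ring.
        rewrite -H'; transitivity (a1 * l * (e * (h * m))); first ring.
        by rewrite -H'; ring.
      * apply: lt_mulr => //; apply: lt_mul2 (le_refl _) _ nhm; exact: lt_mulr.
  by split; [rewrite E1 | rewrite E2]; rewrite !mulrA.
- move=> H.
  have nm : m <> 0 by move=> m0; apply: (lt_neq0 H); rewrite m0 mulr0.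
  have nhm := mul_neq0 nh nm.
  apply: s3e.
  + apply: (ltC (esym EA) (esym EB)); apply: lt_mulr => //.
    apply: lt_mul2 (lt_le H) _ nhm; exact: lt_le_trans H Hzm.
  + apply: (ltC (esym EC2) (esym EB2)); apply: lt_mulr => //.
    exact: mul_neq0.
Qed.


Lemma part3 (a1 a2 a l m : R) :
  a1 <> 0 -> a2 <> 0 -> ~ (l = 0 /\ m = 0) ->
  nu_le (a ^+ 2) (a1 * a2) ->
  let S := l ^+ 2 * a1 + m ^+ 2 * a2 + l * m * a in
  [/\ nu_lt (m ^+ 2 * a2) (l ^+ 2 * a1) -> S = l ^+ 2 * a1,
      nu_eq (l ^+ 2 * a1) (m ^+ 2 * a2) ->
        [/\ S = e * l ^+ 2 * a1, S = e * m ^+ 2 * a2 & nu_square (a1 * a2)]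
    & nu_lt (l ^+ 2 * a1) (m ^+ 2 * a2) -> S = m ^+ 2 * a2].
Proof.
move=> n1 n2 Hnz H S.
set A := l ^+ 2 * a1; set B := m ^+ 2 * a2; set C := l * m * a.
have CC : nu_le (C * C) (A * B).
  have := le_mulr (l ^+ 2 * m ^+ 2) H.
  have -> : a ^+ 2 * (l ^+ 2 * m ^+ 2) = C * C by rewrite /C; ring.
  by have -> : a1 * a2 * (l ^+ 2 * m ^+ 2) = A * B by rewrite /A /B; ring.
split.
- move=> L; have nA := lt_neq0 L.
  apply: s3a => //; apply: sq_lt; apply: le_lt_trans CC _.
  rewrite [A * B]mulrC; exact: lt_mulr.
- move=> E.
  have CA : nu_le C A.
    apply: sq_le; apply: le_trans CC _; apply: eq_le.
    move: E; rewrite /nu_eq => E.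
    transitivity (A * (e * B)); first ring.
    by rewrite -E; ring.
  have [E1 E2] := s3f E CA.
  split; [by rewrite /S E1 /A mulrA | by rewrite /S E2 /B mulrA |].
  have nm : m <> 0.
    move=> m0; apply: Hnz; split => //.
    apply: NNPP => nl.
    move: E; rewrite /nu_eq /B m0 expr2 !mul0r mulr0 => /zero_nu.
    rewrite /A expr2; exact: mul_neq0 (mul_neq0 nl nl) n1.
  have nm2 : m ^+ 2 <> 0 by rewrite expr2; exact: mul_neq0.
  case: (inv_ex nm) => w Hw.
  exists (l * a1 * w); apply: (cancel_eq nm2).
  move: E; rewrite /nu_eq => E.
  transitivity (a1 * (e * B)); first by rewrite /B; ring.
  rewrite -E; transitivity ((l * a1) ^+ 2 * (m * w) * (e * (m * w))); last ring.
  rewrite Hw; transitivity ((l * a1) ^+ 2 * (e * (m * w))); last ring.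
  by rewrite Hw /A; ring.
- move=> L; have nB := lt_neq0 L.
  apply: s3e => //; apply: sq_lt; apply: le_lt_trans CC _.
  exact: lt_mulr.
Qed.

End S.

Lemma expand (R : comPzSemiRingType) (V : lSemiModType R)
  (q : V -> R) (b : V -> V -> R) (x y : V) (lam mu : R) :
  quadratic_pair q b ->
  q (lam *: x + mu *: y) = lam ^+ 2 * q x + mu ^+ 2 * q y + lam * mu * b x y.
Proof.
case=> Hs [Hsym [_ [Hhom Hq]]].
rewrite Hq !Hs Hhom Hsym Hhom Hsym; by rewrite mulrA.
Qed.

Local Notation e := (ee _).

Theorem proposition3p4 (R : comPzSemiRingType) (V : lSemiModType R)
  (q : V -> R) (b : V -> V -> R) (x y : V) (zeta eta lam mu : R) :
  tangible_supersemifield R ->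
  quadratic_pair q b ->
  q x <> 0 -> q y <> 0 -> b x y <> 0 ->
  tangible zeta -> tangible eta ->
  nu_eq (b x y) (zeta * q x) -> nu_eq (q y) (eta * b x y) ->
  ~ (lam = 0 /\ mu = 0) ->
  let a1 := q x in let a2 := q y in let a := b x y in
  let Q := q (lam *: x + mu *: y) in
  [/\
  (* (i) *)
  (nu_lt (a1 * a2) (a ^+ 2) ->
   ~ discrete_and_nu_eq_pinv (a ^+ 2) (a1 * a2) ->
   [/\ nu_lt (zeta * mu) lam -> Q = lam ^+ 2 * a1,
       nu_eq lam (zeta * mu) -> Q = ee R * lam ^+ 2 * a1 /\ Q = ee R * lam * mu * a,
       nu_lt (eta * mu) lam -> nu_lt lam (zeta * mu) -> Q = lam * mu * a,
       nu_eq lam (eta * mu) -> Q = ee R * mu ^+ 2 * a2 /\ Q = ee R * lam * mu * a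
     & nu_lt lam (eta * mu) -> Q = mu ^+ 2 * a2]),
  (* (ii) *)
  (discrete_and_nu_eq_pinv (a ^+ 2) (a1 * a2) ->
   [/\ [\/ nu_lt (zeta * mu) lam, nu_eq lam (zeta * mu),
           nu_eq lam (eta * mu) | nu_lt lam (eta * mu)],
       (~ (nu_lt (zeta * mu) lam /\ nu_eq lam (zeta * mu)) /\
        ~ (nu_lt (zeta * mu) lam /\ nu_eq lam (eta * mu)) /\
        ~ (nu_lt (zeta * mu) lam /\ nu_lt lam (eta * mu)) /\
        ~ (nu_eq lam (zeta * mu) /\ nu_eq lam (eta * mu)) /\
        ~ (nu_eq lam (zeta * mu) /\ nu_lt lam (eta * mu)) /\
        ~ (nu_eq lam (eta * mu) /\ nu_lt lam (eta * mu))) &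
       [/\ nu_lt (zeta * mu) lam -> Q = lam ^+ 2 * a1,
           nu_eq lam (zeta * mu) -> Q = ee R * lam ^+ 2 * a1 /\ Q = ee R * lam * mu * a,
           nu_eq lam (eta * mu) -> Q = ee R * mu ^+ 2 * a2 /\ Q = ee R * lam * mu * a
         & nu_lt lam (eta * mu) -> Q = mu ^+ 2 * a2]]) &
  (* (iii) *)
  (nu_le (a ^+ 2) (a1 * a2) ->
   [/\ nu_lt (mu ^+ 2 * a2) (lam ^+ 2 * a1) -> Q = lam ^+ 2 * a1,
       nu_eq (lam ^+ 2 * a1) (mu ^+ 2 * a2) ->
         [/\ Q = ee R * lam ^+ 2 * a1, Q = ee R * mu ^+ 2 * a2 & nu_square (a1 * a2)]
     & nu_lt (lam ^+ 2 * a1) (mu ^+ 2 * a2) -> Q = mu ^+ 2 * a2])].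
Proof.
move=> HR Hqp n1 n2 na Tz Th Ha Ha2 Hnz.
cbv zeta.
rewrite (@expand R V q b x y lam mu Hqp).
move: n1 n2 na Ha Ha2; rewrite /nu_eq.
move: (q x) (q y) (b x y) => a1 a2 a n1 n2 na Ha Ha2.
have nz := tang_neq0 Tz; have nh := tang_neq0 Th.
have F := five HR (l := lam) (m := mu) n1 na nz nh Ha Ha2.
split.
- move=> Hlt _.
  apply: (F _ Hnz).
  apply: (cancel_lt HR n1); apply: (cancel_lt HR na).
  apply: (ltC (x := a1 * a2) (y := a ^+ 2)) Hlt.
  + transitivity (a1 * (e * a2)); first ring.
    by rewrite Ha2; ring.
  + transitivity (a * (e * a)); first ring.
    by rewrite Ha; ring.
- move=> [pinv [[Tp Sm] Heq]]; case: Sm => Gc [Lc Hmin].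
  move: Heq; rewrite /nu_eq => Heq.
  have Ezp : e * zeta = e * (pinv * eta).
    apply: (cancel_eq HR n1); apply: (cancel_eq HR na); rewrite /nu_eq.
    transitivity (a * (e * a)); first by rewrite Ha; ring.
    transitivity (e * a ^+ 2); first ring.
    rewrite Heq; transitivity (pinv * a1 * (e * a2)); first ring.
    by rewrite Ha2; ring.
  have Hzh : nu_lt eta zeta.
    have L1 : nu_lt 1 pinv.
      apply: (ltC _ _ Lc); first by rewrite eeE // mulr1.
      exact: ee_eq.
    have := lt_mulr HR nh L1.
    apply: ltC; first by rewrite mul1r.
    by rewrite Ezp.
  have [F1 F2 F3 F4 F5] := F Hzh Hnz.
  have Hzm : nu_le (eta * mu) (zeta * mu) by apply: le_mulr; exact: lt_le.
  split => //.
  + case: (tricho HR lam (zeta * mu)) => [H2|H|H]; last by apply: Or41.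
    * case: (tricho HR lam (eta * mu)) => [H|H|H1]; [by apply: Or44 | by apply: Or43 |].
      exfalso.
      have nm : mu <> 0 by move=> m0; apply: (lt_neq0 H2); rewrite m0 mulr0.
      have nhm := mul_neq0 HR nh nm.
      case: (inv_ex HR nhm) => w Hw.
      have nw : w <> 0 by move=> w0; apply: (ee_neq0 HR); rewrite -Hw w0 !mulr0.
      have nl := lt_neq0 H1.
      have L1 := lt_mulr HR nw H1.
      have Gg : ghostnz (e * (lam * w)).
        split; first by exists (lam * w).
        move=> E; apply: (mul_neq0 HR nl nw); exact: (zero_nu HR E).
      have Lg : nu_lt e (e * (lam * w)).
        apply: ltC L1; first by rewrite Hw eeE.
        by rewrite ee_eq.
      have := Hmin _ Gg Lg.
      move/(leC (ee_eq HR pinv) (ee_eq HR (lam * w))).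
      move/(le_mulr (eta * mu)) => H3.
      apply: (lt_nle H2); apply: leC H3.
      * transitivity (e * (pinv * eta) * mu); first ring.
        by rewrite -Ezp; ring.
      * transitivity (lam * (e * (eta * mu * w))); first ring.
        by rewrite Hw mulrC.
    * by apply: Or42.
  + split; [|split; [|split; [|split; [|split]]]].
    * by case=> H1 H2; apply: (lt_neq H1); exact: eq_sym.
    * case=> H1 H2; apply: (lt_nle H1); exact: le_trans (eq_le HR H2) Hzm.
    * case=> H1 H2; apply: (lt_nle H1); exact: le_trans (lt_le H2) Hzm.
    * case=> H1 H2; case: (classic (mu = 0)) => [m0|nm].
      - apply: Hnz; split => //; apply: (zero_nu HR).
        move: H1; rewrite /nu_eq m0 !mulr0 => ->. by [].
      - apply: (lt_neq (lt_mulr HR nm Hzh)).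
        move: H1 H2; rewrite /nu_eq => <- <-. by [].
    * case=> H1 H2; apply: (lt_nle H2); exact: le_trans Hzm (eq_le HR (eq_sym H1)).
    * by case=> H1 H2; apply: (lt_neq H2).
- exact: part3.
Qed.
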